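(* Let $n\ge 1$, $k=\lceil\log_2 n\rceil$, and let $G=(V,E)$ be the complete graph on $V=\{1,\ldots,n\}$. For $i\in V$ let $\mathbf i=(i_1,\ldots,i_k)\in\{0,1\}^k$ be the binary digits of $i-1$, i.e. $i-1=\sum_{t=1}^k i_t2^{t-1}$, and set $a_{ij}=(-1)^{\langle\mathbf i,\mathbf j\rangle}$ where $\langle\mathbf i,\mathbf j\rangle=\sum_{t=1}^k i_tj_t$. Then $\mu^+(V)\leqslant n^{3/2}/\sqrt2$ and $\mu^-(V)\geqslant -n^{3/2}/\sqrt2$.
   Context: For disjoint $U_1,U_2\subseteq V$, $\delta(U_1,U_2)$ is the set of edges with one endpoint in $U_1$ and one in $U_2$. $\mu^+(V)=\max\{\sum_{ij\in\delta(U_1,U_2)}a_{ij}:U_1\cup U_2=V,\ U_1\cap U_2=\emptyset\}$ and $\mu^-(V)$ is the corresponding minimum. *)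

(* Defs.v *)
From HB Require Import structures.
From mathcomp Require Import all_boot all_order all_algebra.
Set Implicit Arguments. Unset Strict Implicit. Unset Printing Implicit Defensive.
Import Order.TTheory GRing.Theory Num.Theory.
Local Open Scope ring_scope.

(* Vertex i : 'I_n stands for the paper's vertex i+1; its binary vector
   is the binary expansion of (i+1)-1 = i, digits t = 0 .. k-1. *)

Definition kbits (n : nat) : nat := up_log 2 n.

Definition bit (i t : nat) : bool := odd (i %/ 2 ^ t).

Definition ip (k i j : nat) : nat := (\sum_(t < k) (bit i t && bit j t))%N.

Definition aw (n : nat) (i j : 'I_n) : int := (-1) ^+ ip (kbits n) i j.

Definition cutw (n : nat) (U : {set 'I_n}) : int :=
  \sum_(i in U) \sum_(j in ~: U) aw i j.

Definition mu_plus (n : nat) : int :=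
  \big[Num.max/cutw (set0 : {set 'I_n})]_(U : {set 'I_n}) cutw U.
Definition mu_minus (n : nat) : int :=
  \big[Num.min/cutw (set0 : {set 'I_n})]_(U : {set 'I_n}) cutw U.

(* Main.v *)
Require Import Defs.
From HB Require Import structures.
From mathcomp Require Import all_boot all_order all_algebra.
From mathcomp Require Import zify ring lra.
Import Order.TTheory GRing.Theory Num.Theory.
Local Open Scope ring_scope.

Lemma bitS i t : bit i t.+1 = bit i./2 t.
Proof. by rewrite /bit expnS divnMA divn2. Qed.
Lemma bit0 i : bit i 0 = odd i.
Proof. by rewrite /bit expn0 divn1. Qed.

Lemma ipS k i j : ip k.+1 i j = ((odd i && odd j) + ip k i./2 j./2)%N.
Proof.
rewrite /ip big_ord_recl /= !bit0; congr (_ + _)%N.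
by apply: eq_bigr => t _; rewrite /bump /= !add1n !bitS.
Qed.

Definition h k i j : int := (-1) ^+ ip k i j.

Lemma sum_double (F : nat -> int) m :
  \sum_(i < m.*2) F i = \sum_(i < m) (F i.*2 + F i.*2.+1).
Proof.
elim: m => [|m IH]; first by rewrite !big_ord0.
by rewrite doubleS !big_ord_recr /= IH addrA.
Qed.

Lemma orth k j j' : (j < 2 ^ k)%N -> (j' < 2 ^ k)%N ->
  \sum_(i < 2 ^ k) h k i j * h k i j' = (j == j')%:R * (2 ^ k)%:R.
Proof.
elim: k j j' => [|k IH] j j'.
  rewrite expn0 => /[!ltnS] /[!leqn0] /eqP-> /eqP->.
  by rewrite big_ord1 /h /ip !big_ord0 mulr1.
move=> hj hj'.
have hj2 : (j./2 < 2 ^ k)%N.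
  by rewrite -divn2 ltn_divLR // -expnSr.
have hj2' : (j'./2 < 2 ^ k)%N.
  by rewrite -divn2 ltn_divLR // -expnSr.
rewrite expnS mul2n (sum_double (fun i => h k.+1 i j * h k.+1 i j')).
have E : forall i, h k.+1 i.*2 j * h k.+1 i.*2 j' + h k.+1 i.*2.+1 j * h k.+1 i.*2.+1 j'
   = (1 + (-1) ^+ (odd j + odd j')) * (h k i j./2 * h k i j'./2).
  move=> i; have H1 : (i.*2.+1)./2 = i by rewrite -[i.*2.+1]/(true + i.*2)%N half_bit_double.
  rewrite /h !ipS H1 /= odd_double doubleK.
  case: (odd j); case: (odd j'); rewrite /= ?add0n ?exprD ?expr0 ?expr1; ring.
under eq_bigr => i _ do rewrite E.
rewrite -mulr_sumr IH //.
have ej := odd_double_half j; have ej' := odd_double_half j'.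
clear hj2 hj2' hj hj' E IH.
move: (odd j) (odd j') (j./2) (j'./2) ej ej' => b b' a a' <- <-.
have D : forall x y : nat, (x.*2 == y.*2) = (x == y).
  by move=> x y; apply/eqP/eqP => [|->//]; lia.
have O : forall x y : nat, (x.*2 == (1 + y.*2)%N) = false.
  by move=> x y; apply/eqP; lia.
rewrite -[(2 ^ k).*2]mul2n natrM.
case: b; case: b'; rewrite /= ?add0n ?exprD ?expr0 ?expr1 ?eqn_add2l ?D ?O ?(eq_sym (1 + _)%N) ?O.
all: rewrite ?natrD; try ring.
all: by rewrite ?mulr1 ?subrr !mul0r.
Qed.

Lemma cs (I : finType) (A : {set I}) (v : I -> int) :
  (\sum_(i in A) v i) ^+ 2 <= #|A|%:R * \sum_(i in A) v i ^+ 2.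
Proof.
set c := \sum_(i in A) v i; set m : int := #|A|%:R.
have H : 0 <= \sum_(i in A) (m * v i - c) ^+ 2 by apply: sumr_ge0 => i _; exact: sqr_ge0.
have E : \sum_(i in A) (m * v i - c) ^+ 2 =
   m * (m * \sum_(i in A) v i ^+ 2 - c ^+ 2).
  have P : forall i, (m * v i - c) ^+ 2 = m ^+ 2 * v i ^+ 2 - (2 * m * c) * v i + c ^+ 2 by move=> i; ring.
  under eq_bigr => i _ do rewrite P.
  rewrite big_split /= sumrB -!mulr_sumr sumr_const -/c /m -mulr_natr; ring.
rewrite E in H.
have [m0|mpos] := eqVneq m 0.
  have : #|A| = 0%N by apply/eqP; rewrite -(eqr_nat int) -/m m0.
  move/eqP; rewrite cards_eq0 => /eqP A0.
  by rewrite /c A0 big_set0 expr0n /= mulr_ge0 // sumr_ge0 // => i _; exact: sqr_ge0.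
have mp : 0 < m by rewrite lt0r mpos /m ler0n.
by rewrite -subr_ge0; rewrite pmulr_rge0 in H.
Qed.

Lemma Nbounds n : (1 <= n)%N -> (n <= 2 ^ kbits n)%N /\ (2 ^ kbits n <= 2 * n)%N.
Proof.
move=> hn; split; first exact: up_logP.
rewrite /kbits; have [->|n1] := eqVneq n 1%N; first by rewrite up_log1.
have n1' : (1 < n)%N by rewrite ltn_neqAle eq_sym n1 hn.
have := up_log_gtn (isT : (1 < 2)%N) n1'.
have : (0 < up_log 2 n)%N by rewrite up_log_gt0 n1'.
case: (up_log 2 n) => // e _ /=; rewrite expnS; lia.
Qed.

Lemma cut_bound n (U : {set 'I_n}) : (1 <= n)%N -> 2 * cutw U ^+ 2 <= (n ^ 3)%:R.
Proof.
move=> hn; have [nN N2n] := @Nbounds n hn.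
set k := kbits n in nN N2n; set N := (2 ^ k)%N in nN N2n.
set W := ~: U.
pose V (i : nat) : int := \sum_(j in W) h k i j.
have c_eq : cutw U = \sum_(i in U) V i by [].
have S1 : \sum_(i in U) V i ^+ 2 <= \sum_(i < n) V i ^+ 2.
  rewrite [X in _ <= X](bigID (fun i => i \in U)) /= lerDl.
  by apply: sumr_ge0 => i _; exact: sqr_ge0.
have S2 : \sum_(i < n) V i ^+ 2 <= \sum_(i < N) V i ^+ 2.
  rewrite (big_ord_widen N (fun i => V i ^+ 2) nN).
  rewrite [X in _ <= X](bigID (fun i : 'I_N => (i < n)%N)) /= lerDl.
  by apply: sumr_ge0 => i _; exact: sqr_ge0.
have S3 : \sum_(i < N) V i ^+ 2 = (#|W| * N)%:R.
  under eq_bigr => i _ do rewrite /V expr2 big_distrlr /=.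
  rewrite exchange_big /=.
  under eq_bigr => j _ do rewrite exchange_big /=.
  have jlt : forall j : 'I_n, (j < N)%N by move=> j; exact: leq_trans (ltn_ord j) nN.
  under eq_bigr => j _ do under eq_bigr => j' _ do rewrite orth ?jlt //.
  rewrite natrM mulr_natl -sumr_const; apply: eq_bigr => j jW.
  rewrite (bigD1 j) //= eqxx mul1r big1 ?addr0 // => j' /andP[_ ne].
  have -> : ((j : nat) == j') = false by apply/negbTE; rewrite eq_sym; exact: ne.
  by rewrite mul0r.
have CS := @cs _ U (fun i => V (nat_of_ord i)).
have card : (#|U| + #|W|)%N = n by rewrite cardsC card_ord.
have key : (2 * (#|U| * (#|W| * N)) <= n ^ 3)%N.
  move: card N2n; move: #|U| #|W| => u w <- H2.
  have -> : ((u + w) ^ 3 = (u + w) * (u + w) * (u + w))%N by rewrite !expnS expn0 muln1 mulnA.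
  have A1 : (4 * (u * w) <= (u + w) * (u + w))%N.
    have := (nat_Cauchy u w).1; rewrite mulnn sqrnD; lia.
  have A2 : (2 * (u * (w * N)) <= 4 * (u * w) * (u + w))%N.
    have := leq_mul (leqnn (2 * (u * w))) H2; nia.
  have := leq_mul A1 (leqnn (u + w)); nia.
rewrite c_eq; apply: le_trans (_ : 2 * (#|U| * (#|W| * N))%:R <= _).
  rewrite ler_pM2l // natrM; apply: (le_trans CS); rewrite ler_wpM2l //.
  by rewrite -S3; apply: le_trans S1 S2.
by rewrite -natrM ler_nat.
Qed.

Lemma real_bound (R : rcfType) (n : nat) (c : int) :
  2 * c ^+ 2 <= (n ^ 3)%:R ->
  `|(c%:~R : R)| <= Num.sqrt ((n%:R : R) ^+ 3 / 2).
Proof.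
move=> H; rewrite -sqrtr_sqr ler_sqrt; last first.
  by rewrite divr_ge0 // exprn_ge0.
rewrite ler_pdivlMr // mulrC.
have := H; rewrite -(ler_int R) rmorphM rmorphXn /= natrX.
rewrite rmorphXn /= !natz; exact.
Qed.

Theorem lemma2 (R : rcfType) (n : nat) (hn : (1 <= n)%N) :
  (mu_plus n)%:~R <= Num.sqrt ((n%:R : R) ^+ 3 / 2) /\
  - Num.sqrt ((n%:R : R) ^+ 3 / 2) <= (mu_minus n)%:~R.
Proof.
pose P (x : int) := 2 * x ^+ 2 <= (n ^ 3)%:R.
have Pp : P (mu_plus n).
  apply: (big_ind P); first exact: cut_bound.
    by move=> x y Px Py; rewrite /Order.max; case: ifP.
  by move=> U _; exact: cut_bound.
have Pm : P (mu_minus n).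
  apply: (big_ind P); first exact: cut_bound.
    by move=> x y Px Py; rewrite /Order.min; case: ifP.
  by move=> U _; exact: cut_bound.
split.
  exact: le_trans (ler_norm _) ((@real_bound R n _ Pp)).
rewrite lerNl; apply: le_trans ((@real_bound R n _ Pm)).
by rewrite -normrN ler_norm.
Qed.
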